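(* Let $\mathcal V$ be a finite set, $2\le k\le|\mathcal V|-2$, let $\Gamma\subset\binom{\mathcal V}{k}$ be a code, and suppose that $\Gamma$ is $G$-strongly incidence-transitive with $G\le{\rm Aut}(\Gamma)\cap{\rm Sym}(\mathcal V)$. Let $\gamma\in\Gamma$, and suppose that $G_\gamma<H<G$ with $H$ transitive on $\mathcal V$ and leaving invariant a non-trivial partition $\Pi$ of $\mathcal V$. Then $\gamma$ is a union of some of the blocks of $\Pi$.
   Context: A code is a proper non-empty subset of $\binom{\mathcal V}{k}$, the $k$-subsets of $\mathcal V$ (vertices of the Johnson graph, adjacent iff meeting in $k-1$ points); ${\rm Aut}(\Gamma)$ is its setwise stabiliser in the automorphism group of the Johnson graph. $\Gamma$ is $G$-strongly incidence-transitive if $G$ is transitive on $\Gamma$ and, for $\gamma\in\Gamma$, $G_\gamma$ is transitive on $\gamma\times(\mathcal V\setminus\gamma)$. *)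

(* Defs.v *)
From mathcomp Require Import all_boot all_fingroup.
Set Implicit Arguments. Unset Strict Implicit. Unset Printing Implicit Defensive.
Local Open Scope group_scope.

Section Defs.
Variable V : finType.

Definition pimg (g : {perm V}) (A : {set V}) : {set V} := [set g x | x in A].

Definition is_code (k : nat) (Gamma : {set {set V}}) : Prop :=
  Gamma != set0 /\ Gamma \proper [set A : {set V} | #|A| == k].

(* G <= Aut(Gamma) ∩ Sym(V): elements of G (permutations of V) fix Gamma setwise *)
Definition preserves (G : {set {perm V}}) (Gamma : {set {set V}}) : Prop :=
  forall g, g \in G -> [set pimg g A | A in Gamma] = Gamma.

Definition setstab (G : {set {perm V}}) (gamma : {set V}) : {set {perm V}} :=
  [set g in G | pimg g gamma == gamma].

Definition strongly_incidence_transitive (G : {set {perm V}})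
    (Gamma : {set {set V}}) : Prop :=
  (forall A B, A \in Gamma -> B \in Gamma -> exists2 g, g \in G & pimg g A = B) /\
  (forall gamma, gamma \in Gamma ->
     forall a b a' b', a \in gamma -> b \notin gamma -> a' \in gamma -> b' \notin gamma ->
     exists2 g, g \in setstab G gamma & (g a = a' /\ g b = b')).

Definition transitive_on_V (H : {set {perm V}}) : Prop :=
  forall x y : V, exists2 h, h \in H & h x = y.

Definition nontrivial_partition (P : {set {set V}}) : Prop :=
  partition P [set: V] /\ P != [set [set x] | x : V] /\ P != [set [set: V]].

Definition leaves_invariant (H : {set {perm V}}) (P : {set {set V}}) : Prop :=
  forall h B, h \in H -> B \in P -> pimg h B \in P.
End Defs.

(* Main.v *)
Require Import Defs.
From mathcomp Require Import all_boot all_fingroup.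

Theorem lemma5p2 (V : finType) (k : nat) (Gamma : {set {set V}})
    (G H : {group {perm V}}) (gamma : {set V}) (P : {set {set V}}) :
  2 <= k -> k <= #|V| - 2 ->
  is_code k Gamma ->
  preserves G Gamma ->
  strongly_incidence_transitive G Gamma ->
  gamma \in Gamma ->
  setstab G gamma \proper H -> H \proper G ->
  transitive_on_V H ->
  nontrivial_partition P ->
  leaves_invariant H P ->
  exists2 S : {set {set V}}, S \subset P & gamma = cover S.
Proof.
move=> _ _ _ _ [_ sit] gG sGH _ _ [partP [_ ntP]] invH.
move/and3P: partP => [/eqP covP tiP s0P].
have inC x : x \in cover P by rewrite covP inE.
case: (boolP [exists a, exists b, [&& a \in gamma, b \notin gamma &
                                   pblock P a == pblock P b]]).
- case/existsP=> a /existsP [b /and3P [ag bg /eqP eab]].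
  have key a' b' : a' \in gamma -> b' \notin gamma -> pblock P a' = pblock P b'.
    move=> a'g b'g.
    have [g gS [ga gb]] := sit gamma gG a b a' b' ag bg a'g b'g.
    have gH : g \in H by apply: (subsetP (proper_sub sGH)).
    have Bm : pblock P a \in P by apply: pblock_mem.
    have gB := invH g _ gH Bm.
    have a'B : a' \in pimg g (pblock P a).
      by rewrite /pimg -ga; apply: imset_f; rewrite mem_pblock.
    have b'B : b' \in pimg g (pblock P a).
      by rewrite /pimg -gb; apply: imset_f; rewrite eab mem_pblock.
    by rewrite (def_pblock tiP gB a'B) (def_pblock tiP gB b'B).
  have allC x : pblock P x = pblock P a.
    case: (boolP (x \in gamma)) => xg.
      by rewrite (key x b xg bg) -eab.
    by rewrite (key a x ag xg).
  have CT : pblock P a = [set: V].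
    apply/setP=> x; rewrite inE -(allC x) mem_pblock; exact: inC.
  exfalso; move/negP: ntP; apply; apply/eqP/setP=> B; rewrite inE.
  apply/idP/eqP.
    move=> BP; have : B != set0 by apply: contraNneq s0P => <-.
    case/set0Pn=> x xB; by rewrite -CT -(allC x) (def_pblock tiP BP xB).
  by move=> ->; rewrite -CT; apply: pblock_mem.
- move=> nex; exists [set B in P | B \subset gamma].
    by apply/subsetP=> B; rewrite inE => /andP[].
  apply/setP=> x; apply/idP/bigcupP.
    move=> xg; exists (pblock P x); last by rewrite mem_pblock.
    rewrite inE pblock_mem //=; apply/subsetP=> y yB.
    apply: contraNT nex => yg; apply/existsP; exists x; apply/existsP; exists y.
    by rewrite xg yg /= (def_pblock tiP (pblock_mem (inC x)) yB).
  by case=> B; rewrite inE => /andP[_ /subsetP]; apply.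
Qed.
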